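(* Let $\ket\psi$ be the output state of a $t$-doped Clifford circuit on $n$ qubits. Then the stabilizer dimension of $\ket\psi$ is at least $n-2t$.
   Context: A $t$-doped Clifford circuit starts in $\ket{0^n}$ and consists of Clifford gates (Hadamard, Phase, CNOT) and at most $t$ single-qubit non-Clifford gates. For $x=(a,b)\in\mathbb F_2^{2n}$, $W_x = i^{a\cdot b}X^{a_1}Z^{b_1}\otimes\cdots\otimes X^{a_n}Z^{b_n}$ ($a\cdot b$ over the integers). $\mathrm{Weyl}(\ket\psi)=\{x\in\mathbb F_2^{2n}:W_x\ket\psi=\pm\ket\psi\}$ is a subspace of $\mathbb F_2^{2n}$, and the stabilizer dimension of $\ket\psi$ is its dimension. *)

(* Defs.v *)
From HB Require Import structures.
From mathcomp Require Import all_boot all_order all_algebra.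
Set Implicit Arguments. Unset Strict Implicit. Unset Printing Implicit Defensive.
Import Order.TTheory GRing.Theory Num.Theory.
Local Open Scope ring_scope.

Section QC.
(* Amplitudes live in an arbitrary numeric algebraically closed field C
   (e.g. the complex numbers), with conjugation ^* and imaginary unit 'i. *)
Variable C : numClosedFieldType.
Variable n : nat.

Notation basis := {ffun 'I_n -> bool}.
(* a (not necessarily normalized) n-qubit state vector *)
Notation state := {ffun basis -> C}.

Definition b2o (b : bool) : 'I_2 := if b then ord_max else ord0.
Definition upd (x : basis) (j : 'I_n) (b : bool) : basis :=
  [ffun i => if i == j then b else x i].

Definition ket0 : state := [ffun x : basis => if x == [ffun => false] then 1 else 0].

(* apply a single-qubit operator U : 'M_2 to qubit j:
   U |c> = sum_r U r c |r>, tensored with the identity on the other qubits *)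
Definition apply1 (U : 'M[C]_2) (j : 'I_n) (psi : state) : state :=
  [ffun x : basis => \sum_(c : bool) U (b2o (x j)) (b2o c) * psi (upd x j c)].

Definition apply_cnot (j k : 'I_n) (psi : state) : state :=
  [ffun x : basis => psi (upd x k (x k (+) x j))].

Definition Hmx : 'M[C]_2 :=
  (sqrtC 2)^-1 *: \matrix_(r < 2, c < 2) (if (r == 1%N :> nat) && (c == 1%N :> nat) then -1 else 1).
Definition Smx : 'M[C]_2 :=
  \matrix_(r < 2, c < 2) (if r == c then (if r == 1%N :> nat then 'i else 1) else 0).
Definition Xmx : 'M[C]_2 := \matrix_(r < 2, c < 2) (if r == c then 0 else 1).
Definition Zmx : 'M[C]_2 :=
  \matrix_(r < 2, c < 2) (if r == c then (if r == 1%N :> nat then -1 else 1) else 0).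

Definition unitary2 (U : 'M[C]_2) : Prop := U *m (map_mx Num.conj U)^T = 1%:M.

Inductive gate :=
| GH of 'I_n
| GS of 'I_n
| GCNOT of 'I_n & 'I_n
| G1 of 'M[C]_2 & 'I_n.

Definition apply_gate (g : gate) (psi : state) : state :=
  match g with
  | GH j => apply1 Hmx j psi
  | GS j => apply1 Smx j psi
  | GCNOT j k => apply_cnot j k psi
  | G1 U j => apply1 U j psi
  end.

Definition gate_ok (g : gate) : Prop :=
  match g with
  | GCNOT j k => j <> k
  | G1 U _ => unitary2 U
  | _ => True
  end.

Definition is_nonclifford (g : gate) : bool := if g is G1 _ _ then true else false.

Fixpoint all_ok (c : seq gate) : Prop :=
  if c is g :: c' then gate_ok g /\ all_ok c' else True.

Definition t_doped (t : nat) (c : seq gate) : Prop :=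
  all_ok c /\ (count is_nonclifford c <= t)%N.

Definition run (c : seq gate) : state := foldl (fun psi g => apply_gate g psi) ket0 c.

(* F_2^{2n}: x = (a, b), a = first n coordinates, b = last n coordinates *)
Notation F2n := 'rV['F_2]_(n + n).
Definition xa (x : F2n) (k : 'I_n) : bool := x 0 (lshift n k) != 0.
Definition xb (x : F2n) (k : 'I_n) : bool := x 0 (rshift n k) != 0.

(* a . b over the integers *)
Definition adotb (x : F2n) : nat := \sum_(k < n) (xa x k && xb x k).

Definition Xpow (a : bool) : 'M[C]_2 := if a then Xmx else 1%:M.
Definition Zpow (b : bool) : 'M[C]_2 := if b then Zmx else 1%:M.

(* W_x = i^{a.b} X^{a_1}Z^{b_1} (x) ... (x) X^{a_n}Z^{b_n}, as an operator on states *)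
Definition weyl (x : F2n) (psi : state) : state :=
  let P := foldr (fun k phi => apply1 (Xpow (xa x k) *m Zpow (xb x k)) k phi)
                 psi (enum 'I_n) in
  [ffun y : basis => 'i ^+ adotb x * P y].

Definition Weyl (psi : state) : {set F2n} :=
  [set x : F2n | (weyl x psi == psi) || (weyl x psi == [ffun y : basis => - psi y])].

Definition stabdim (psi : state) : nat := \dim <<enum (Weyl psi)>>%VS.

End QC.

(* Main.v *)
Require Import Defs.
From mathcomp Require Import all_boot all_order all_algebra.
From mathcomp Require Import zify ring.
Set Implicit Arguments. Unset Strict Implicit. Unset Printing Implicit Defensive.
Import Order.TTheory GRing.Theory Num.Theory.
Local Open Scope ring_scope.

Definition sg {C : numClosedFieldType} (b : bool) : C := if b then -1 else 1.

Lemma sgM (C : numClosedFieldType) b1 b2 : sg (b1 (+) b2) = sg b1 * sg b2 :> C.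
Proof. by case: b1; case: b2; rewrite /sg /= ?mulr1 ?mul1r ?mulrNN ?mulr1. Qed.

Lemma XZ_entry (C : numClosedFieldType) (a b r c : bool) :
  (Xpow C a *m Zpow C b) (b2o r) (b2o c) = if c == r (+) a then sg (b && c) else 0 :> C.
Proof.
by case: a; case: b; case: r; case: c;
  rewrite /Xpow /Zpow /Xmx /Zmx /b2o /sg ?mul1mx ?mulmx1 /= !mxE ?big_ord_recl ?big_ord0 /= ?mxE /=;
  rewrite ?mulr0 ?mul0r ?mulr1 ?mul1r ?addr0 ?add0r.
Qed.


Lemma foldr_XZ (C : numClosedFieldType) n (x : 'rV['F_2]_(n + n)) (psi : {ffun {ffun 'I_n -> bool} -> C}) (s : seq 'I_n) y :
  uniq s ->
  foldr (fun k phi => apply1 (Xpow C (xa x k) *m Zpow C (xb x k)) k phi) psi s y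
  = (\prod_(k <- s) sg (xb x k && (y k (+) xa x k))) * psi [ffun k => y k (+) (xa x k && (k \in s))].
Proof.
elim: s y => [|k s IH] y /=.
  move=> _; rewrite big_nil mul1r; congr (psi _); apply/ffunP => i; by rewrite ffunE andbF addbF.
case/andP => ks us.
rewrite ffunE (bigD1 (y k (+) xa x k)) //= big1 => [|c /negbTE Hc]; last by rewrite XZ_entry Hc mul0r.
rewrite addr0 XZ_entry eqxx IH // big_cons mulrA; congr (_ * _ * psi _).
  apply: eq_big_seq => i iS; rewrite /upd ffunE; case: eqP => // ik.
  by rewrite -ik iS in ks.
apply/ffunP => i; rewrite !ffunE /upd inE; case: (eqVneq i k) => [->|ik] /=.
  by rewrite (negbTE ks) andbF addbF andbT.
by [].
Qed.

Lemma weylE (C : numClosedFieldType) n (x : 'rV['F_2]_(n + n)) (psi : {ffun {ffun 'I_n -> bool} -> C}) y :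
  weyl x psi y = 'i ^+ adotb x * (\prod_k sg (xb x k && (y k (+) xa x k))) * psi [ffun k => y k (+) xa x k].
Proof.
rewrite /weyl ffunE foldr_XZ ?enum_uniq // mulrA; congr (_ * _ * psi _).
  by rewrite big_enum.
by apply/ffunP => i; rewrite !ffunE mem_enum andbT.
Qed.
Lemma F2_cases (u : 'F_2) : u = 0 \/ u = 1.
Proof. case: u => [[|[|m]] Hm]; [left|right|by []]; exact: val_inj. Qed.

Lemma F2_addn0 (u v : 'F_2) : (u + v != 0) = (u != 0) (+) (v != 0).
Proof. by case: (F2_cases u) => ->; case: (F2_cases v) => ->. Qed.

Lemma F2_mulbn0 (b : bool) (u : 'F_2) : ((b%:R * u) != 0) = b && (u != 0).
Proof. by case: b; case: (F2_cases u) => ->. Qed.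

Lemma F2_addxx (u : 'F_2) : u + u = 0.
Proof. case: (F2_cases u) => ->; [by rewrite addr0 | exact: val_inj]. Qed.

Definition sel N K (s : 'I_K -> 'I_N) : 'M['F_2]_(N, K) := \matrix_(i, k) (i == s k)%:R.
Lemma sel_entry N K (x : 'rV['F_2]_N) (s : 'I_K -> 'I_N) k : (x *m sel s) 0 k = x 0 (s k).
Proof.
rewrite !mxE (bigD1 (s k)) //= mxE eqxx mulr1 big1 ?addr0 // => i /negbTE H.
by rewrite mxE H mulr0.
Qed.

Definition tv N (p q : 'I_N) : 'M['F_2]_N := 1%:M + delta_mx p q.
Lemma tv_entry N (x : 'rV['F_2]_N) p q k : (x *m tv p q) 0 k = x 0 k + (k == q)%:R * x 0 p.
Proof.
rewrite mulmxDr mulmx1 mxE; congr (_ + _).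
rewrite !mxE (bigD1 p) //= mxE eqxx big1 /= => [|i /negbTE H]; last by rewrite mxE H mulr0.
by rewrite addr0 mulrC eq_sym.
Qed.

Lemma F2_eq (u v : 'F_2) : (u != 0) = (v != 0) -> u = v.
Proof. by case: (F2_cases u) => ->; case: (F2_cases v) => ->. Qed.

Lemma xab_inj n (x y : 'rV['F_2]_(n + n)) :
  (forall k, xa x k = xa y k) -> (forall k, xb x k = xb y k) -> x = y.
Proof.
move=> ha hb; apply/rowP => i.
case: (splitP i) => k ik.
  have -> : i = lshift n k by apply: val_inj.
  exact/F2_eq/ha.
have -> : i = rshift n k by apply: val_inj.
exact/F2_eq/hb.
Qed.

Definition sH n (j : 'I_n) (i : 'I_(n + n)) : 'I_(n + n) :=
  if i == lshift n j then rshift n j else if i == rshift n j then lshift n j else i.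
Definition MH n (j : 'I_n) : 'M['F_2]_(n + n) := sel (sH j).
Definition MS n (j : 'I_n) : 'M['F_2]_(n + n) := tv (lshift n j) (rshift n j).
Definition MC n (j k : 'I_n) : 'M['F_2]_(n + n) :=
  tv (lshift n j) (lshift n k) *m tv (rshift n k) (rshift n j).

Lemma xa_H n j (x : 'rV['F_2]_(n + n)) k : xa (x *m MH j) k = if k == j then xb x j else xa x k.
Proof. by rewrite /xa /xb sel_entry /sH !eq_shift; case: (k == j). Qed.
Lemma xb_H n j (x : 'rV['F_2]_(n + n)) k : xb (x *m MH j) k = if k == j then xa x j else xb x k.
Proof.
by rewrite /xa /xb sel_entry /sH !eq_shift /=; case: (k == j).
Qed.
Lemma xa_S n j (x : 'rV['F_2]_(n + n)) k : xa (x *m MS j) k = xa x k.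
Proof. by rewrite /xa tv_entry !eq_shift mul0r addr0. Qed.
Lemma xb_S n j (x : 'rV['F_2]_(n + n)) k : xb (x *m MS j) k = xb x k (+) ((k == j) && xa x j).
Proof. by rewrite /xa /xb tv_entry !eq_shift F2_addn0 F2_mulbn0. Qed.
Lemma xa_C n j k (x : 'rV['F_2]_(n + n)) i : xa (x *m MC j k) i = xa x i (+) ((i == k) && xa x j).
Proof. by rewrite /xa /MC mulmxA !tv_entry !eq_shift mul0r addr0 F2_addn0 F2_mulbn0. Qed.
Lemma xb_C n j k (x : 'rV['F_2]_(n + n)) i : xb (x *m MC j k) i = xb x i (+) ((i == j) && xb x k).
Proof. by rewrite /xb /MC mulmxA !tv_entry !eq_shift !mul0r !addr0 F2_addn0 F2_mulbn0. Qed.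

Lemma MH_inj n j : injective (fun x : 'rV['F_2]_(n + n) => x *m MH j).
Proof.
apply: (can_inj (g := fun x => x *m MH j)) => x; apply: xab_inj => k.
  by rewrite !(xa_H, xb_H); case: eqP => [->|]; rewrite ?eqxx.
by rewrite !(xa_H, xb_H); case: eqP => [->|]; rewrite ?eqxx.
Qed.
Lemma MS_inj n j : injective (fun x : 'rV['F_2]_(n + n) => x *m MS j).
Proof.
apply: (can_inj (g := fun x => x *m MS j)) => x; apply: xab_inj => k.
  by rewrite !xa_S.
by rewrite !xb_S !xa_S -addbA addbb addbF.
Qed.
Lemma MC_inj n j k : j != k -> injective (fun x : 'rV['F_2]_(n + n) => x *m MC j k).
Proof.
move=> jk.
apply: (can_inj (g := fun x => x *m MC j k)) => x; apply: xab_inj => i.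
  rewrite !xa_C (negbTE jk) /= addbF.
  by case: (i == k); rewrite /= ?addbF // -addbA addbb addbF.
rewrite !xb_C [k == j]eq_sym (negbTE jk) /= addbF.
by case: (i == j); rewrite /= ?addbF // -addbA addbb addbF.
Qed.


Definition pm (C : numClosedFieldType) n (psi phi : {ffun {ffun 'I_n -> bool} -> C}) :=
  exists e : C, (e = 1 \/ e = -1) /\ forall y, phi y = e * psi y.

Lemma inWeyl (C : numClosedFieldType) n (psi : {ffun {ffun 'I_n -> bool} -> C}) x :
  x \in Weyl psi <-> pm psi (weyl x psi).
Proof.
rewrite inE; split.
  case/orP => /eqP H.
    by exists 1; split; [left|] => // y; rewrite H mul1r.
  by exists (-1); split; [right|] => // y; rewrite H ffunE mulN1r.
case=> e [[->|->] H]; apply/orP; [left|right]; apply/eqP/ffunP => y.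
  by rewrite H mul1r.
by rewrite H ffunE mulN1r.
Qed.

Definition Inv (C : numClosedFieldType) n (psi : {ffun {ffun 'I_n -> bool} -> C}) (m : nat) :=
  exists V : {vspace 'rV['F_2]_(n + n)}, (forall x, x \in V -> x \in Weyl psi) /\ (n <= \dim V + 2 * m)%N.

Lemma transport (C : numClosedFieldType) n (M : 'M['F_2]_(n + n))
  (g : {ffun {ffun 'I_n -> bool} -> C} -> {ffun {ffun 'I_n -> bool} -> C}) (psi : {ffun {ffun 'I_n -> bool} -> C}) (m : nat) :
  injective (fun x : 'rV['F_2]_(n + n) => x *m M) ->
  (forall (e : C) (psi phi : {ffun {ffun 'I_n -> bool} -> C}), (forall y, phi y = e * psi y) -> forall y, g phi y = e * g psi y) ->
  (forall x, exists k : C, (k = 1 \/ k = -1) /\ forall (psi : {ffun {ffun 'I_n -> bool} -> C}) y, weyl (x *m M) (g psi) y = k * g (weyl x psi) y) ->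
  Inv psi m -> Inv (g psi) m.
Proof.
move=> hinj hlin hconj [V [HV Hd]].
pose f : 'Hom('rV['F_2]_(n + n), 'rV['F_2]_(n + n)) := linfun (mulmxr M).
have fE x : f x = x *m M by rewrite lfunE.
exists (f @: V)%VS; split.
  move=> w /memv_imgP [x xV ->]; rewrite fE.
  have /inWeyl [e [he He]] := HV x xV.
  have [k [hk Hk]] := hconj x.
  apply/inWeyl; exists (k * e); split.
    by case: hk => ->; case: he => ->; rewrite ?mul1r ?mulr1 ?mulN1r ?opprK; auto.
  by move=> y; rewrite Hk (hlin e psi) // mulrA.
rewrite limg_dim_eq //.
have /eqP -> : lker f == 0%VS by apply/lker0P => x y; rewrite !fE; apply: hinj.
by rewrite capv0.
Qed.

Lemma apply1_lin (C : numClosedFieldType) n (U : 'M[C]_2) (j : 'I_n) (e : C) (psi phi : {ffun {ffun 'I_n -> bool} -> C}) :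
  (forall y, phi y = e * psi y) -> forall y, apply1 U j phi y = e * apply1 U j psi y.
Proof.
move=> H y; rewrite !ffunE mulr_sumr; apply: eq_bigr => c _.
by rewrite H mulrCA.
Qed.

Lemma cnot_lin (C : numClosedFieldType) n (j k : 'I_n) (e : C) (psi phi : {ffun {ffun 'I_n -> bool} -> C}) :
  (forall y, phi y = e * psi y) -> forall y, apply_cnot j k phi y = e * apply_cnot j k psi y.
Proof. by move=> H y; rewrite !ffunE H. Qed.

Lemma local_G1 (C : numClosedFieldType) n (U : 'M[C]_2) (j : 'I_n) x (psi : {ffun {ffun 'I_n -> bool} -> C}) y :
  xa x j = false -> xb x j = false ->
  weyl x (apply1 U j psi) y = apply1 U j (weyl x psi) y.
Proof.
move=> ha hb.
rewrite weylE !ffunE mulr_sumr; apply: eq_bigr => c _; rewrite weylE ha addbF.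
have -> : \prod_k sg (xb x k && (upd y j c k (+) xa x k)) = \prod_k sg (xb x k && (y k (+) xa x k)) :> C.
  apply: eq_bigr => k _; rewrite /upd ffunE; case: eqP => [->|//].
  by rewrite hb.
have -> : [ffun k => upd y j c k (+) xa x k] = upd [ffun k => y k (+) xa x k] j c.
  apply/ffunP => k; rewrite /upd !ffunE; case: eqP => [->|//].
  by rewrite ha addbF.
by rewrite mulrCA.
Qed.

Lemma G1_step (C : numClosedFieldType) n (U : 'M[C]_2) (j : 'I_n) (psi : {ffun {ffun 'I_n -> bool} -> C}) m :
  Inv psi m -> Inv (apply1 U j psi) m.+1.
Proof.
move=> [V [HV Hd]].
pose s2 := fun k : 'I_2 => if k == ord0 then lshift n j else rshift n j.
pose f : 'Hom('rV['F_2]_(n + n), 'rV['F_2]_2) := linfun (mulmxr (sel s2)).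
have fE x : f x = x *m sel s2 by rewrite lfunE.
exists (V :&: lker f)%VS; split.
  move=> x; rewrite memv_cap memv_ker fE => /andP [xV /eqP x0].
  have ha : xa x j = false.
    by rewrite /xa -(sel_entry x s2 ord0) x0 mxE eqxx.
  have hb : xb x j = false.
    by rewrite /xb -(sel_entry x s2 ord_max) x0 mxE eqxx.
  have /inWeyl [e [he He]] := HV x xV.
  apply/inWeyl; exists e; split => // y.
  by rewrite local_G1 // (apply1_lin _ _ He).
have := limg_ker_dim f V.
have : (\dim (f @: V) <= 2)%N.
  apply: leq_trans (dimvS (subvf _)) _; rewrite dimvf. by [].
move=> h1 h2; apply: leq_trans Hd _; rewrite -h2 mulnS -addnA leq_add2l leq_add2r //.
Qed.

Lemma init_inv (C : numClosedFieldType) n : Inv (ket0 C n) 0.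
Proof.
pose f : 'Hom('rV['F_2]_(n + n), 'rV['F_2]_n) := linfun (mulmxr (sel (fun k : 'I_n => lshift n k))).
have fE x : f x = x *m sel (fun k : 'I_n => lshift n k) by rewrite lfunE.
exists (lker f); split.
  move=> x; rewrite memv_ker fE => /eqP x0.
  have ha k : xa x k = false by rewrite /xa -(sel_entry x (fun k : 'I_n => lshift n k) k) x0 mxE eqxx.
  apply/inWeyl; exists 1; split; [by left|] => y.
  rewrite weylE mul1r.
  have -> : adotb x = 0%N by rewrite /adotb big1 // => k _; rewrite ha.
  rewrite expr0 mul1r.
  have -> : [ffun k => y k (+) xa x k] = y by apply/ffunP => k; rewrite ffunE ha addbF.
  rewrite /ket0 ffunE; case: eqP => [->|]; last by rewrite mulr0.
  by rewrite mulr1 big1 // => k _; rewrite ffunE ha andbF.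
have := limg_ker_dim f fullv.
have : (\dim (f @: fullv) <= n)%N.
  by apply: leq_trans (dimvS (subvf _)) _; rewrite dimvf dim_matrix mul1r.
rewrite capfv dimvf dim_matrix mul1r => h1 h2.
rewrite muln0 addn0.
by rewrite -(leq_add2r (\dim (f @: fullv))) h2 leq_add2l.
Qed.

Lemma sg_pm (C : numClosedFieldType) b : sg b = 1 :> C \/ sg b = -1 :> C.
Proof. by case: b; [right|left]. Qed.



Lemma Qsplit (C : numClosedFieldType) n (j : 'I_n) (a b y a' b' y' : 'I_n -> bool) :
 (forall k, k != j -> [/\ a' k = a k, b' k = b k & y' k = y k]) ->
 \prod_k sg (b' k && (y' k (+) a' k)) = sg (b' j && (y' j (+) a' j)) * \prod_(k | k != j) sg (b k && (y k (+) a k)) :> C.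
Proof.
move=> H; rewrite (bigD1 j) //=; congr (_ * _); apply: eq_bigr => k kj.
by case: (H k kj) => -> -> ->.
Qed.

Lemma adot_split n (j : 'I_n) (x x' : 'rV['F_2]_(n + n)) :
 (forall k, k != j -> xa x' k = xa x k /\ xb x' k = xb x k) ->
 adotb x' = ((xa x' j && xb x' j) + \sum_(k | k != j) (xa x k && xb x k))%N.
Proof.
move=> H; rewrite /adotb (bigD1 j) //=; congr (_ + _)%N; apply: eq_bigr => k kj.
by case: (H k kj) => -> ->.
Qed.

Lemma upd_id n (y : {ffun 'I_n -> bool}) j : upd y j (y j) = y.
Proof. by apply/ffunP => k; rewrite /upd ffunE; case: eqP => [->|]. Qed.

Lemma upd_upd_xor n (y : {ffun 'I_n -> bool}) (a : 'I_n -> bool) j c :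
  [ffun k => upd y j c k (+) a k] = upd [ffun k => y k (+) a k] j (c (+) a j).
Proof. by apply/ffunP => k; rewrite /upd !ffunE; case: eqP => [->|]. Qed.

Lemma upd_off n (w z : {ffun 'I_n -> bool}) j c :
  (forall k, k != j -> w k = z k) -> upd w j c = upd z j c.
Proof. by move=> H; apply/ffunP => k; rewrite /upd !ffunE; case: eqP => // /eqP /H. Qed.

Lemma upd_j n (y : {ffun 'I_n -> bool}) j c : upd y j c j = c.
Proof. by rewrite /upd ffunE eqxx. Qed.

Lemma upd_k n (y : {ffun 'I_n -> bool}) j c k : k != j -> upd y j c k = y k.
Proof. by move=> kj; rewrite /upd ffunE (negbTE kj). Qed.

Lemma Hmx_entry (C : numClosedFieldType) (r c : bool) :
  Hmx C (b2o r) (b2o c) = (sqrtC 2)^-1 * sg (r && c).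
Proof. by rewrite /Hmx !mxE; case: r; case: c. Qed.

Lemma apply1_H (C : numClosedFieldType) n (j : 'I_n) (psi : {ffun {ffun 'I_n -> bool} -> C}) y :
  apply1 (Hmx C) j psi y = (sqrtC 2)^-1 * (sg (y j) * psi (upd y j true) + psi (upd y j false)).
Proof.
rewrite ffunE big_bool (Hmx_entry C (y j) true) (Hmx_entry C (y j) false) andbT andbF /sg /=; ring.
Qed.

Lemma H_conj (C : numClosedFieldType) n (j : 'I_n) x (psi : {ffun {ffun 'I_n -> bool} -> C}) y :
  weyl (x *m MH j) (apply1 (Hmx C) j psi) y = sg (xa x j && xb x j) * apply1 (Hmx C) j (weyl x psi) y.
Proof.
have off k : k != j -> xa (x *m MH j) k = xa x k /\ xb (x *m MH j) k = xb x k.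
  by move=> kj; rewrite xa_H xb_H (negbTE kj).
have hA : adotb (x *m MH j) = adotb x.
  by rewrite (adot_split off) (@adot_split n j x x) // xa_H xb_H eqxx andbC.
set z := [ffun k => y k (+) xa x k].
rewrite weylE !apply1_H !weylE hA.
rewrite (@Qsplit C n j (xa x) (xb x) y); last by move=> k kj; case: (off k kj) => -> ->.
rewrite (@Qsplit C n j (xa x) (xb x) y (xa x) (xb x) (upd y j true)); last first.
  by move=> k kj; rewrite /upd ffunE (negbTE kj).
rewrite (@Qsplit C n j (xa x) (xb x) y (xa x) (xb x) (upd y j false)); last first.
  by move=> k kj; rewrite /upd ffunE (negbTE kj).
rewrite !upd_upd_xor -/z.
have hw : forall k, k != j -> [ffun k => y k (+) xa (x *m MH j) k] k = z k.
  by move=> k kj; rewrite !ffunE xa_H (negbTE kj).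
rewrite !(fun c => upd_off c hw) !upd_j ffunE xa_H xb_H eqxx.
pose F c := psi (upd z j c).
rewrite -/(F true) -/(F false) -/(F (true (+) xa x j)) -/(F (false (+) xa x j)).
move: (\prod_(k | k != j) sg (xb x k && (y k (+) xa x k))) ('i ^+ adotb x) ((sqrtC 2)^-1) => P I r.
clearbody F.
by case: (xa x j); case: (xb x j); case: (y j); rewrite /sg /=; ring.
Qed.

Lemma Smx_entry (C : numClosedFieldType) (r c : bool) :
  Smx C (b2o r) (b2o c) = if c == r then 'i ^+ r else 0.
Proof. by rewrite /Smx !mxE; case: r; case: c; rewrite /= ?expr0 ?expr1. Qed.

Lemma upd_same n (y : {ffun 'I_n -> bool}) j c : y j = c -> upd y j c = y.
Proof. by move=> <-; apply: upd_id. Qed.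

Lemma apply1_S (C : numClosedFieldType) n (j : 'I_n) (psi : {ffun {ffun 'I_n -> bool} -> C}) y :
  apply1 (Smx C) j psi y = 'i ^+ (y j) * psi y.
Proof.
rewrite ffunE big_bool (Smx_entry C (y j) true) (Smx_entry C (y j) false).
by case hy: (y j); rewrite /= ?mul0r ?addr0 ?add0r upd_same.
Qed.

Lemma S_core (C : numClosedFieldType) (a b y : bool) :
  'i ^+ ((a && (b (+) a)) + (y (+) a)) * sg ((b (+) a) && (y (+) a))
  = sg (a && b) * ('i ^+ (y + (a && b)) * sg (b && (y (+) a))) :> C.
Proof.
by case: a; case: b; case: y; rewrite /sg /= ?expr0 ?expr1 ?sqrCi; ring.
Qed.

Lemma S_conj (C : numClosedFieldType) n (j : 'I_n) x (psi : {ffun {ffun 'I_n -> bool} -> C}) y :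
  weyl (x *m MS j) (apply1 (Smx C) j psi) y = sg (xa x j && xb x j) * apply1 (Smx C) j (weyl x psi) y.
Proof.
have off k : k != j -> xa (x *m MS j) k = xa x k /\ xb (x *m MS j) k = xb x k.
  by move=> kj; rewrite xa_S xb_S (negbTE kj) addbF.
rewrite weylE !apply1_S weylE.
rewrite (adot_split off) (@adot_split n j x x) //.
set A := (\sum_(k | k != j) _)%N.
rewrite (@Qsplit C n j (xa x) (xb x) y); last by move=> k kj; case: (off k kj) => -> ->.
rewrite (@Qsplit C n j (xa x) (xb x) y (xa x) (xb x) y) //.
have -> : [ffun k => y k (+) xa (x *m MS j) k] = [ffun k => y k (+) xa x k].
  by apply/ffunP => k; rewrite !ffunE xa_S.
rewrite !xa_S xb_S eqxx /= ffunE.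
move: (\prod_(k | k != j) sg (xb x k && (y k (+) xa x k))) (psi _) => P u.
have core := S_core C (xa x j) (xb x j) (y j).
rewrite !exprD in core *.
move: ('i ^+ A) core => IA.
move: (xa x j) (xb x j) (y j) => a b c core.
apply: (etrans _ (etrans (congr1 (fun t => t * (IA * P * u)) core) _)); ring.
Qed.

Lemma C_core (C : numClosedFieldType) (aj ak bj bk yj yk : bool) :
  'i ^+ ((aj && (bj (+) bk)) + ((ak (+) aj) && bk)) * sg ((bj (+) bk) && (yj (+) aj)) * sg (bk && (yk (+) (ak (+) aj)))
  = sg (aj && bk && ~~ (bj (+) ak)) * ('i ^+ ((aj && bj) + (ak && bk)) * sg (bj && (yj (+) aj)) * sg (bk && ((yk (+) yj) (+) ak))) :> C.
Proof.
by case: aj; case: ak; case: bj; case: bk; case: yj; case: yk; rewrite /sg /= ?expr0 ?expr1 ?sqrCi; ring.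
Qed.

Lemma Qsplit2 (C : numClosedFieldType) n (j k : 'I_n) (a b y a' b' y' : 'I_n -> bool) :
 j != k ->
 (forall i, i != j -> i != k -> [/\ a' i = a i, b' i = b i & y' i = y i]) ->
 \prod_i sg (b' i && (y' i (+) a' i)) = sg (b' j && (y' j (+) a' j)) * sg (b' k && (y' k (+) a' k))
   * \prod_(i | (i != j) && (i != k)) sg (b i && (y i (+) a i)) :> C.
Proof.
move=> jk H; rewrite (bigD1 j) //= (bigD1 k) /=; last by rewrite eq_sym.
rewrite mulrA; congr (_ * _); apply: eq_bigr => i /andP [ij ik].
by case: (H i ij ik) => -> -> ->.
Qed.

Lemma adot_split2 n (j k : 'I_n) (x x' : 'rV['F_2]_(n + n)) :
 j != k ->
 (forall i, i != j -> i != k -> xa x' i = xa x i /\ xb x' i = xb x i) ->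
 adotb x' = ((xa x' j && xb x' j) + (xa x' k && xb x' k) + \sum_(i | (i != j) && (i != k)) (xa x i && xb x i))%N.
Proof.
move=> jk H; rewrite /adotb (bigD1 j) //= (bigD1 k) /=; last by rewrite eq_sym.
rewrite addnA; congr (_ + _)%N; apply: eq_bigr => i /andP [ij ik].
by case: (H i ij ik) => -> ->.
Qed.

Lemma cnotE (C : numClosedFieldType) n (j k : 'I_n) (psi : {ffun {ffun 'I_n -> bool} -> C}) y :
  apply_cnot j k psi y = psi (upd y k (y k (+) y j)).
Proof. by rewrite ffunE. Qed.

Lemma C_conj (C : numClosedFieldType) n (j k : 'I_n) x (psi : {ffun {ffun 'I_n -> bool} -> C}) y :
  j != k ->
  weyl (x *m MC j k) (apply_cnot j k psi) y
  = sg (xa x j && xb x k && ~~ (xb x j (+) xa x k)) * apply_cnot j k (weyl x psi) y.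
Proof.
move=> jk.
have kj : k != j by rewrite eq_sym.
have off i : i != j -> i != k -> xa (x *m MC j k) i = xa x i /\ xb (x *m MC j k) i = xb x i.
  by move=> ij ik; rewrite xa_C xb_C (negbTE ij) (negbTE ik) !addbF.
rewrite weylE !cnotE weylE.
rewrite (adot_split2 jk off) (@adot_split2 n j k x x jk); last by [].
set A := (\sum_(i | _) _)%N.
rewrite (@Qsplit2 C n j k (xa x) (xb x) y _ _ _ jk); last by move=> i ij ik; case: (off i ij ik) => -> ->.
rewrite (@Qsplit2 C n j k (xa x) (xb x) y (xa x) (xb x) (upd y k (y k (+) y j)) jk); last first.
  by move=> i ij ik; rewrite upd_k.
have -> : upd [ffun i => y i (+) xa (x *m MC j k) i] k
            ([ffun i => y i (+) xa (x *m MC j k) i] k (+) [ffun i => y i (+) xa (x *m MC j k) i] j)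
          = [ffun i => upd y k (y k (+) y j) i (+) xa x i].
  apply/ffunP => i; rewrite /upd !ffunE !xa_C eqxx (negbTE jk) /= addbF.
  case: (eqVneq i k) => [->|ik] /=; first by case: (xa x j); case: (xa x k); case: (y j); case: (y k).
  by rewrite addbF.
rewrite !xa_C !xb_C !eqxx (negbTE jk) (negbTE kj) !andTb !andFb !addbF upd_j (upd_k _ _ jk).
move: (\prod_(i | (i != j) && (i != k)) sg (xb x i && (y i (+) xa x i))) (psi _) => P u.
have core := C_core C (xa x j) (xa x k) (xb x j) (xb x k) (y j) (y k).
rewrite !exprD in core *.
move: ('i ^+ A) core => IA.
move: (xa x j) (xa x k) (xb x j) (xb x k) (y j) (y k) => aj ak bj bk yj yk core.
apply: (etrans _ (etrans (congr1 (fun t => t * (IA * P * u)) core) _)); ring.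
Qed.

Lemma run_inv (C : numClosedFieldType) n (c : seq (gate C n)) (psi : {ffun {ffun 'I_n -> bool} -> C}) m :
  all_ok c -> Inv psi m ->
  Inv (foldl (fun psi g => apply_gate g psi) psi c) (m + count (@is_nonclifford C n) c).
Proof.
elim: c psi m => [|g c IH] psi m /=; first by rewrite addn0.
case=> hg hc Hinv; rewrite addnA; apply: IH => //.
case: g hg => [j|j|j k|U j] /= hg.
- rewrite addn0; apply: (transport (M := MH j)) Hinv; first exact: MH_inj.
    by move=> e ps ph; apply: apply1_lin.
  by move=> x; exists (sg (xa x j && xb x j)); split; [apply: sg_pm|] => ps y; apply: H_conj.
- rewrite addn0; apply: (transport (M := MS j)) Hinv; first exact: MS_inj.
    by move=> e ps ph; apply: apply1_lin.
  by move=> x; exists (sg (xa x j && xb x j)); split; [apply: sg_pm|] => ps y; apply: S_conj.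
- have jk : j != k by apply/eqP.
  rewrite addn0; apply: (transport (M := MC j k)) Hinv; first exact: MC_inj.
    by move=> e ps ph; apply: cnot_lin.
  move=> x; exists (sg (xa x j && xb x k && ~~ (xb x j (+) xa x k))); split; [apply: sg_pm|].
  by move=> ps y; apply: C_conj.
- by rewrite addn1; apply: G1_step.
Qed.


Unset Implicit Arguments.

Theorem lemma4p2 (C : numClosedFieldType) (n t : nat) (c : seq (gate C n)) :
  t_doped t c -> (n - 2 * t <= stabdim (run c))%N.
Proof.
case=> hok ht.
have [V [HV Hd]] := run_inv hok (init_inv C n).
apply: (@leq_trans (\dim V)).
  rewrite leq_subLR; apply: leq_trans Hd _.
  by rewrite add0n addnC leq_add2r leq_mul2l ht orbT.
apply: dimvS; apply/subvP => x xV; apply: memv_span.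
by rewrite mem_enum; apply: HV.
Qed.
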